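(* Let $x\in\Sigma$, $\ell\ge1$, $n\ge2$ and $\varepsilon=2^{-h}$ with $h\in\mathbb N$; put $\varepsilon_0=1/2$ and $\theta_{nh}=\frac{(n+h-1)^2-(n+h-1)}{n^2-n}$. Then \begin{align*} N_\ell(x,n,\varepsilon)&=N_{\ell+h-1}(x,n+h-1,\varepsilon_0),\\ \lambda_\ell(x,n,\varepsilon)&=\theta_{nh}\,\lambda_{\ell+h-1}(x,n+h-1,\varepsilon_0),\\ \Lambda_\ell(x,n,\varepsilon)&=\theta_{nh}\,\Lambda_{\ell+h-1}(x,n+h-1,\varepsilon_0),\\ \mathrm{RR}_\ell(x,n,\varepsilon)&=\theta_{nh}\big(\mathrm{RR}_{\ell+h-1}(x,n+h-1,\varepsilon_0)-(h-1)\Lambda_{\ell+h-1}(x,n+h-1,\varepsilon_0)\big). \end{align*}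
   Context: $A=\{0,1\}$, $\Sigma=A^{\mathbb N_0}$ with metric $\rho(y,z)=2^{-\min\{i\ge0:\,y_i\ne z_i\}}$ for $y\ne z$, shift $\sigma$. Recurrence plot $R(x,n,\varepsilon)$: $n\times n$ matrix ($0\le i,j<n$) with entry $1$ iff $\rho(\sigma^ix,\sigma^jx)\le\varepsilon$. A line of length $\ell$: $(i,j,\ell)$ with $0\le i,j\le n-\ell$, $i\ne j$, entries $(i+k,j+k)=1$ for $0\le k<\ell$, entry $(i-1,j-1)=0$ if $\min\{i,j\}>0$, entry $(i+\ell,j+\ell)=0$ if $\max\{i,j\}<n-\ell$. $N_\ell(x,n,\varepsilon)$ = number of lines of length exactly $\ell$ (boundary ones included), $\lambda_\ell=N_\ell/(n^2-n)$, $\Lambda_\ell=\sum_{l\ge\ell}\lambda_l$, $\mathrm{RR}_\ell=\sum_{l\ge\ell}l\lambda_l$. *)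

(* Defs.v *)
From HB Require Import structures.
From mathcomp Require Import all_boot all_order all_algebra.
From mathcomp Require Import boolp reals.
Set Implicit Arguments. Unset Strict Implicit. Unset Printing Implicit Defensive.
Import Order.TTheory GRing.Theory Num.Theory.
Local Open Scope ring_scope.

Section RecPlot.
Variable R : realType.

Definition shift (i : nat) (x : nat -> bool) : nat -> bool := fun k => x (i + k)%N.

Definition rho (y z : nat -> bool) : R :=
  match pselect (exists i, y i != z i) with
  | left H => (2%:R ^+ (@ex_minn (fun i => y i != z i) H))^-1
  | right _ => 0
  end.

Definition rec (x : nat -> bool) (eps : R) (i j : nat) : bool :=
  rho (shift i x) (shift j x) <= eps.

Definition isline (x : nat -> bool) (n : nat) (eps : R) (l i j : nat) : bool :=
  [&& (i + l <= n)%N, (j + l <= n)%N, i != j,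
      [forall k : 'I_l, rec x eps (i + k)%N (j + k)%N],
      (0 < minn i j)%N ==> ~~ rec x eps i.-1 j.-1 &
      (maxn i j < n - l)%N ==> ~~ rec x eps (i + l)%N (j + l)%N].

Definition Nlines (x : nat -> bool) (n : nat) (eps : R) (l : nat) : nat :=
  #|[set p : 'I_n.+1 * 'I_n.+1 | isline x n eps l p.1 p.2]|.

Definition lambda (x : nat -> bool) (n : nat) (eps : R) (l : nat) : R :=
  (Nlines x n eps l)%:R / ((n%:R) ^+ 2 - n%:R).

(* Lambda_l = sum_{l' >= l} lambda_l'; lambda_l' = 0 for l' > n, so the sum
   is the finite sum over l <= l' <= n *)
Definition Lambda (x : nat -> bool) (n : nat) (eps : R) (l : nat) : R :=
  \sum_(l <= l' < n.+1) lambda x n eps l'.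

Definition RR (x : nat -> bool) (n : nat) (eps : R) (l : nat) : R :=
  \sum_(l <= l' < n.+1) l'%:R * lambda x n eps l'.

End RecPlot.

(* Main.v *)
Require Import Defs.
From HB Require Import structures.
From mathcomp Require Import all_boot all_order all_algebra.
From mathcomp Require Import boolp reals.
From mathcomp Require Import lra ring zify.
Import Order.TTheory GRing.Theory Num.Theory.
Local Open Scope ring_scope.

Lemma allordP (n : nat) (P : nat -> bool) :
  reflect (forall k, (k < n)%N -> P k) [forall k : 'I_n, P k].
Proof.
apply: (iffP forallP) => H k; last exact: H.
by move=> lt; exact: (H (Ordinal lt)).
Qed.

Section S.
Variable R : realType.

Lemma rec_char x h a b :
  rec x ((2%:R ^+ h)^-1 : R) a b = [forall t : 'I_h, x (a + t)%N == x (b + t)%N].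
Proof.
rewrite /rec /rho; case: pselect => [H|H].
  case: ex_minnP => k Hk Hmin.
  rewrite lef_pV2 ?posrE ?exprn_gt0 ?ltr0n // ler_eXn2l ?ltr1n //.
  apply/idP/(allordP h (fun t => x (a + t)%N == x (b + t)%N)) => [hk t ht|Hall].
    apply/negPn/negP => Hn.
    have := Hmin t Hn; lia.
  rewrite leqNgt; apply/negP => kh.
  by move: Hk; rewrite /shift (Hall _ kh).
rewrite invr_ge0 exprn_ge0 ?ler0n //; apply/esym/(allordP h (fun t => x (a + t)%N == x (b + t)%N)) => t _.
apply/negPn/negP => Hn; apply: H; exists t; exact: Hn.
Qed.

Lemma recP x h a b : reflect (forall t, (t < h)%N -> x (a + t)%N = x (b + t)%N)
  (rec x ((2%:R ^+ h)^-1 : R) a b).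
Proof.
rewrite rec_char; apply: (iffP forallP) => H t.
  by move=> ht; apply/eqP; exact: (H (Ordinal ht)).
by apply/eqP; exact: H _ (ltn_ord t).
Qed.

Lemma rec1 x a b : rec x (2%:R^-1 : R) a b = (x a == x b).
Proof.
rewrite -[X in X^-1]expr1 rec_char; apply/(allordP 1 (fun t => x (a + t)%N == x (b + t)%N))/idP => [H|H t].
  by have := H 0%N isT; rewrite !addn0.
by case: t => // _; rewrite !addn0.
Qed.

Lemma isline_eq x n l h i j : (0 < l)%N ->
  isline x n ((2%:R ^+ h.+1)^-1 : R) l i j
  = isline x (n + h) (2%:R^-1 : R) (l + h) i j.
Proof.
move=> l0; rewrite /isline.
have E1 : (i + l <= n)%N = (i + (l + h) <= n + h)%N by rewrite addnA leq_add2r.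
have E2 : (j + l <= n)%N = (j + (l + h) <= n + h)%N by rewrite addnA leq_add2r.
have E3 : (n + h - (l + h) = n - l)%N by rewrite subnDr.
rewrite E1 E2 E3; clear E1 E2 E3.
have Erun : [forall k : 'I_l, rec x ((2%:R ^+ h.+1)^-1 : R) (i + k) (j + k)]
   = [forall k : 'I_(l + h), rec x (2%:R^-1 : R) (i + k) (j + k)].
  apply/(allordP l (fun k => rec x ((2%:R ^+ h.+1)^-1 : R) (i + k)%N (j + k)%N))/(allordP (l+h) (fun k => rec x (2%:R^-1 : R) (i + k)%N (j + k)%N)) => H k hk.
    rewrite rec1; apply/eqP.
    case: (ltnP k l) => kl.
      by have /recP/(_ 0%N isT) := H k kl; rewrite !addn0.
    have e1 : (i + l.-1 + (k - l.-1) = i + k)%N by lia.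
    have e2 : (j + l.-1 + (k - l.-1) = j + k)%N by lia.
    by have /recP/(_ (k - l.-1)%N ltac:(lia)) := H l.-1 ltac:(lia); rewrite e1 e2.
  apply/recP => t ht.
  by have := H (k + t)%N ltac:(lia); rewrite rec1 !addnA => /eqP.
rewrite Erun; clear Erun.
case Hr: [forall k : 'I_(l + h), rec x (2%:R^-1 : R) (i + k) (j + k)];
  last by rewrite !andbF.
move/(allordP (l+h) (fun k => rec x (2%:R^-1 : R) (i + k)%N (j + k)%N)): Hr => Hr.
have Ed : rec x ((2%:R ^+ h.+1)^-1 : R) i.-1 j.-1 = rec x (2%:R^-1 : R) i.-1 j.-1
   \/ ~~ (0 < minn i j)%N.
  case: i Hr => [|i] Hr; first by right; rewrite min0n.
  case: j Hr => [|j] Hr; first by right; rewrite minn0.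
  left; rewrite rec1 /=; apply/recP/eqP => [H|H t ht].
    by have := H 0%N isT; rewrite !addn0.
  case: t ht => [|t] ht; first by rewrite !addn0.
  by have := Hr t ltac:(lia); rewrite rec1 !addSnnS => /eqP.
have Eu : rec x ((2%:R ^+ h.+1)^-1 : R) (i + l) (j + l)
          = rec x (2%:R^-1 : R) (i + (l + h)) (j + (l + h)).
  rewrite rec1; apply/recP/eqP => [H|H t ht].
    by have := H h (ltnSn h); rewrite !addnA.
  case: (ltnP t h) => th.
    by have := Hr (l + t)%N ltac:(lia); rewrite rec1 !addnA => /eqP.
  have -> : t = h by lia.
  by rewrite -!addnA.
rewrite Eu; case: Ed => [->|Hm] //.
by rewrite (negbTE Hm).
Qed.

Lemma card_widen N M (P : nat -> nat -> bool) (le : (N <= M)%N) :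
  (forall i j, P i j -> (i < N)%N /\ (j < N)%N) ->
  #|[set p : 'I_N * 'I_N | P p.1 p.2]| = #|[set p : 'I_M * 'I_M | P p.1 p.2]|.
Proof.
move=> HP.
pose f := fun p : 'I_N * 'I_N => (widen_ord le p.1, widen_ord le p.2).
have inj_f : injective f.
  move=> [a b] [c d] [e1 e2].
  by congr pair; apply: val_inj.
rewrite -(card_imset _ inj_f); apply: eq_card => -[a b].
rewrite inE /=; apply/imsetP/idP.
  by case=> -[c d]; rewrite inE => Hcd [-> ->].
move=> Hab; have [ha hb] := HP _ _ Hab.
exists (Ordinal ha, Ordinal hb); first by rewrite inE.
by congr pair; apply: val_inj.
Qed.

Lemma Nlines_eq x n l h : (0 < l)%N ->
  Nlines x n ((2%:R ^+ h.+1)^-1 : R) l = Nlines x (n + h) (2%:R^-1 : R) (l + h).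
Proof.
move=> l0; rewrite /Nlines.
have -> : [set p : 'I_n.+1 * 'I_n.+1 | isline x n ((2%:R ^+ h.+1)^-1 : R) l p.1 p.2]
   = [set p : 'I_n.+1 * 'I_n.+1 | isline x (n + h) (2%:R^-1 : R) (l + h) p.1 p.2].
  by apply/setP => p; rewrite !inE isline_eq.
apply: card_widen; first by lia.
move=> a b; rewrite -isline_eq // /isline => /and3P [ha hb _]; lia.
Qed.

End S.

Theorem mainTheorem11 (R : realType) (x : nat -> bool) (l n h : nat) :
  (1 <= l)%N -> (2 <= n)%N -> (1 <= h)%N ->
  let eps : R := (2%:R ^+ h)^-1 in
  let eps0 : R := 2%:R^-1 in
  let m := (n + h - 1)%N in
  let theta : R := ((m%:R) ^+ 2 - m%:R) / ((n%:R) ^+ 2 - n%:R) in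
  [/\ Nlines x n eps l = Nlines x m eps0 (l + h - 1),
      lambda x n eps l = theta * lambda x m eps0 (l + h - 1),
      Lambda x n eps l = theta * Lambda x m eps0 (l + h - 1) &
      RR x n eps l = theta * (RR x m eps0 (l + h - 1)
                              - (h - 1)%:R * Lambda x m eps0 (l + h - 1))].
Proof.
case: h => [//|h] hl hn _.
rewrite !addnS !subn1 /=.
set eps : R := (2%:R ^+ h.+1)^-1; set eps0 : R := 2%:R^-1.
set theta : R := _ / _.
have pos : forall k : nat, (2 <= k)%N -> (0 : R) < k%:R ^+ 2 - k%:R.
  move=> k hk; rewrite expr2 -{3}(mulr1 k%:R) -mulrBr mulr_gt0 //.
    by rewrite ltr0n; lia.
  by rewrite subr_gt0 ltr1n.
have Dn := pos n hn; have Dm := pos (n + h)%N ltac:(lia).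
have lamE : forall i, (0 < i)%N ->
    lambda x n eps i = theta * lambda x (n + h) eps0 (i + h).
  move=> i hi; rewrite /lambda /theta Nlines_eq //.
  by field; rewrite -natrD !lt0r_neq0.
have LamE : Lambda x n eps l = theta * Lambda x (n + h) eps0 (l + h).
  rewrite /Lambda big_addn (_ : ((n + h).+1 - h = n.+1)%N); last lia.
  rewrite mulr_sumr.
  apply: eq_big_nat => k /andP [hk _]; apply: lamE; lia.
split.
- exact: Nlines_eq.
- exact: lamE.
- exact: LamE.
- rewrite /RR /Lambda !big_addn (_ : ((n + h).+1 - h = n.+1)%N); last lia.
  rewrite !mulr_sumr -sumrB mulr_sumr.
  apply: eq_big_nat => k /andP [hk _]; rewrite lamE; last lia.
  rewrite natrD; ring.
Qed.
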